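(* Let $\mathbf{A}\in\mathbb{Z}^{r\times n}$ be a fixed matrix, let $s\ge1$, and let $\mathbf{x}\in\{-1,0,1\}^n$ be random with independent coordinates, where for each $i$, $x_i=0$ with probability $1-\frac{2c}{s}$ and $x_i=1$ or $x_i=-1$ each with probability $\frac{c}{s}$, for a sufficiently small absolute constant $c>0$. Suppose there exist $\mathbf{y}\in\mathbb{R}^r$ and $j\in[n]$ such that $|\mathrm{Frac}((\mathbf{y}^\top\mathbf{A})_j)|^2\ge\frac{1}{s}\|\mathrm{Frac}(\mathbf{y}^\top\mathbf{A})\|_2^2$. Then the mutual information satisfies $I(\mathbf{A}\mathbf{x};x_j)=\Omega\left(\frac{1}{s}\right)$.
   Context: For $x\in\mathbb{R}$, $\mathrm{Frac}(x)=x-\mathrm{int}(x)\in(-\tfrac12,\tfrac12]$, where $\mathrm{int}(x)$ is the integer closest to $x$; for a vector, $\mathrm{Frac}$ is applied coordinatewise. $I(\cdot;\cdot)$ denotes Shannon mutual information. *)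

(* Defs.v *)
From mathcomp Require Import all_boot all_order all_algebra.
From mathcomp Require Import all_classical all_reals all_analysis.
Set Implicit Arguments. Unset Strict Implicit. Unset Printing Implicit Defensive.
Import Order.TTheory GRing.Theory Num.Theory.
Local Open Scope ring_scope.

Section Defs.
Variable R : realType.

(* Frac x = x - int(x) in (-1/2, 1/2], int(x) the nearest integer
   (ties x = k + 1/2 resolved so that Frac x = 1/2). *)
Definition Frac (x : R) : R := x - (Num.ceil (x - 2^-1))%:~R.

Definition probE (Om : finType) (P : Om -> R) (E : pred Om) : R :=
  \sum_(w | E w) P w.

Definition mutual_info (Om : finType) (T1 T2 : eqType) (P : Om -> R)
    (X : Om -> T1) (Y : Om -> T2) : R :=
  \sum_(a <- undup [seq X w | w <- enum Om])
   \sum_(b <- undup [seq Y w | w <- enum Om])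
     let pab := probE P (fun w => (X w == a) && (Y w == b)) in
     if pab == 0 then 0
     else pab * ln (pab / (probE P (fun w => X w == a) *
                           probE P (fun w => Y w == b))).

Definition sgn3 (k : 'I_3) : int := (val k)%:Z - 1.

Definition coord_law (c s : R) (k : 'I_3) : R :=
  if val k == 1%N then 1 - 2 * c / s else c / s.

Definition xlaw (n : nat) (c s : R) (w : {ffun 'I_n -> 'I_3}) : R :=
  \prod_(i < n) coord_law c s (w i).

Definition xvec (n : nat) (w : {ffun 'I_n -> 'I_3}) : 'cV[int]_n :=
  \col_i sgn3 (w i).

Definition yA (r n : nat) (y : 'rV[R]_r) (A : 'M[int]_(r, n)) : 'rV[R]_n :=
  y *m map_mx (fun z : int => z%:~R) A.

End Defs.

(* Main.v *)
Require Import Defs.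
From mathcomp Require Import all_boot all_order all_algebra.
From mathcomp Require Import all_classical all_reals all_analysis.
From mathcomp Require Import ring lra.
Import Order.TTheory GRing.Theory Num.Theory.
Local Open Scope ring_scope.

Section S.
Variable R : realType.

Lemma Frac_itv (x : R) : -(2^-1) < Frac x <= 2^-1.
Proof.
rewrite /Frac; have := ceil_itv (x - 2^-1); rewrite rmorphB /=.
move=> /andP[h1 h2]; apply/andP; split; lra.
Qed.

Lemma FracDz (x : R) (m : int) : Frac (x + m%:~R) = Frac x.
Proof.
rewrite /Frac.
have -> : x + m%:~R - 2^-1 = (x - 2^-1) + m%:~R by rewrite addrAC.
rewrite ceilDrz ?intr_int // intrKceil rmorphD /=; lra.
Qed.

Lemma Frac_id (x : R) : -(2^-1) < x <= 2^-1 -> Frac x = x.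
Proof.
move=> /andP[h1 h2]; rewrite /Frac.
have -> : Num.ceil (x - 2^-1) = 0.
  by apply/eqP; rewrite ceil_eq /=; apply/andP; split; lra.
by rewrite subr0.
Qed.

Lemma FracE (x : R) : exists m : int, Frac x = x - m%:~R.
Proof. by exists (Num.ceil (x - 2^-1)). Qed.

Lemma ln_ge (u : R) : 0 < u -> 1 - u^-1 <= ln u.
Proof.
move=> u0; have := @le_ln1Dx R (u^-1 - 1).
rewrite addrCA subrr addr0 lnV ?posrE // => h.
have : -1 < u^-1 - 1 by have := invr_gt0 u; rewrite u0 => /= ?; lra.
move/h; lra.
Qed.


Definition KLt (a b : R) := if a == 0 then 0 else a * ln (a / b).

Lemma KLt_ge (a b v : R) : 0 <= a -> 0 <= b -> (a != 0 -> 0 < b) -> 0 < v ->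
  a * ln v + a - b * v <= KLt a b.
Proof.
move=> a0 b0 ab v0; rewrite /KLt; case: eqP => [->|/eqP an0].
  by rewrite mul0r addr0 subr_le0 mulr_ge0 // ltW.
have ap : 0 < a by rewrite lt_def an0.
have bp := ab an0.
have up : 0 < a / b by rewrite divr_gt0.
have := @ln_ge (a / b / v) (divr_gt0 up v0); rewrite ln_div ?posrE // => h.
have e : a * (a / b / v)^-1 = b * v.
  by field; rewrite !gt_eqF.
have := ler_wpM2l (ltW ap) h; rewrite mulrBr mulr1 e mulrBr => h2.
lra.
Qed.

Lemma KLt_ge0 (a b : R) : 0 <= a -> 0 <= b -> (a != 0 -> 0 < b) -> a - b <= KLt a b.
Proof. move=> *; have := @KLt_ge a b 1; rewrite ln1 mulr0 add0r mulr1; apply => //. Qed.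

Lemma logsum (I : Type) (r : seq I) (S : pred I) (a b : I -> R) :
  (forall i, 0 <= a i) -> (forall i, 0 <= b i) -> (forall i, a i != 0 -> 0 < b i) ->
  0 < \sum_(i <- r | S i) a i -> 0 < \sum_(i <- r | S i) b i ->
  (\sum_(i <- r | S i) a i) * ln ((\sum_(i <- r | S i) a i) / (\sum_(i <- r | S i) b i))
   <= \sum_(i <- r | S i) KLt (a i) (b i).
Proof.
move=> a0 b0 ab Ap Bp; set A := \sum_(i <- r | S i) a i; set B := \sum_(i <- r | S i) b i.
have vp : 0 < A / B by rewrite divr_gt0.
have H : \sum_(i <- r | S i) (a i * ln (A/B) + a i - b i * (A/B)) <= \sum_(i <- r | S i) KLt (a i) (b i).
  apply: ler_sum => i _; exact: (@KLt_ge (a i) (b i) (A/B) (a0 i) (b0 i) (@ab i) vp).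
apply: le_trans H.
rewrite big_split /= big_split /= sumrN -!mulr_suml -/A -/B.
rewrite mulrCA mulfV ?gt_eqF // mulr1; lra.
Qed.


Lemma sum_pick (T : eqType) (r : seq T) x (F : T -> R) :
  uniq r -> x \in r -> \sum_(a <- r) (if x == a then F a else 0) = F x.
Proof.
move=> ur xr; rewrite (bigD1_seq x) //= eqxx big1 ?addr0 // => a.
by rewrite eq_sym => /negbTE ->.
Qed.

Lemma sum_pick2 (T T' : eqType) (r : seq T) (x a : T') y (F : T -> R) :
  uniq r -> y \in r ->
  \sum_(b <- r) (if x == a then (if y == b then F b else 0) else 0) = if x == a then F y else 0.
Proof. by move=> ur yr; case: (x == a); [rewrite sum_pick | rewrite big1]. Qed.

Section MI.
Variables (Om : finType) (T1 T2 : eqType) (P : Om -> R) (X : Om -> T1) (Y : Om -> T2).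
Let LX := undup [seq X w | w <- enum Om].
Let LY := undup [seq Y w | w <- enum Om].
Let rP := [seq (a, b) | a <- LX, b <- LY].

Lemma inLX w : X w \in LX.
Proof. by rewrite mem_undup; apply: map_f; rewrite mem_enum. Qed.
Lemma inLY w : Y w \in LY.
Proof. by rewrite mem_undup; apply: map_f; rewrite mem_enum. Qed.

Lemma MI_pairs : mutual_info P X Y =
  \sum_(ab <- rP) KLt (probE P (fun w => (X w == ab.1) && (Y w == ab.2)))
                      (probE P (fun w => X w == ab.1) * probE P (fun w => Y w == ab.2)).
Proof. by rewrite big_allpairs. Qed.

Lemma marg1 (Q : pred (T1 * T2)) :
  \sum_(ab <- rP | Q ab) probE P (fun w => (X w == ab.1) && (Y w == ab.2))
  = \sum_(w | Q (X w, Y w)) P w.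
Proof.
rewrite big_mkcond big_allpairs /= [RHS]big_mkcond /=.
transitivity (\sum_w \sum_(a <- LX) \sum_(b <- LY)
   (if X w == a then (if Y w == b then (if Q (a, b) then P w else 0) else 0) else 0)).
  rewrite [RHS]exchange_big /=; apply: eq_bigr => a _.
  rewrite [RHS]exchange_big /=; apply: eq_bigr => b _.
  rewrite /probE big_mkcond /=.
  case: (Q (a, b)) => /=; last by symmetry; apply: big1 => w _; by case: (X w == a); case: (Y _ == b).
  by apply: eq_bigr => w _; case: (X w == a); case: (Y w == b).
apply: eq_bigr => w _.
under eq_bigr => a _ do rewrite (@sum_pick2 _ _ _ _ _ (Y w) (fun b => if Q (a, b) then P w else 0)) ?undup_uniq ?inLY //.
by rewrite sum_pick ?undup_uniq ?inLX.
Qed.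

Lemma marg2 (Q : pred (T1 * T2)) :
  \sum_(ab <- rP | Q ab) (probE P (fun w => X w == ab.1) * probE P (fun w => Y w == ab.2))
  = \sum_w \sum_w' (if Q (X w, Y w') then P w * P w' else 0).
Proof.
rewrite big_mkcond big_allpairs /=.
transitivity (\sum_w \sum_w' \sum_(a <- LX) \sum_(b <- LY)
   (if X w == a then (if Y w' == b then (if Q (a, b) then P w * P w' else 0) else 0) else 0)).
  under [RHS]eq_bigr => w _ do rewrite exchange_big /=.
  rewrite [RHS]exchange_big /=; apply: eq_bigr => a _.
  under [RHS]eq_bigr => w _ do rewrite exchange_big /=.
  rewrite [RHS]exchange_big /=; apply: eq_bigr => b _.
  rewrite /probE big_mkcond [X in _ * X]big_mkcond /=.
  case: (Q (a, b)) => /=; last by symmetry; apply: big1 => w _; apply: big1 => w' _; by case: (X w == a); case: (Y _ == b).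
  rewrite mulr_suml; apply: eq_bigr => w _; rewrite mulr_sumr; apply: eq_bigr => w' _.
  by case: (X w == a); case: (Y w' == b); rewrite ?mulr0 ?mul0r.
apply: eq_bigr => w _; apply: eq_bigr => w' _.
under eq_bigr => a _ do rewrite (@sum_pick2 _ _ _ _ _ (Y w') (fun b => if Q (a, b) then P w * P w' else 0)) ?undup_uniq ?inLY //.
by rewrite sum_pick ?undup_uniq ?inLX.
Qed.

Lemma probE_mono (E E' : pred Om) : (forall w, 0 <= P w) -> (forall w, E w -> E' w) ->
  probE P E <= probE P E'.
Proof.
move=> P0 EE; rewrite /probE big_mkcond [X in _ <= X]big_mkcond /=.
apply: ler_sum => w _; case: ifP => [/EE ->//|_]; by case: ifP.
Qed.

Lemma MI_lb (S : pred (T1 * T2)) (al be : R) : (forall w, 0 <= P w) -> \sum_w P w = 1 ->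
  al = \sum_(w | S (X w, Y w)) P w ->
  be = \sum_w \sum_w' (if S (X w, Y w') then P w * P w' else 0) ->
  0 < al -> 0 < be ->
  al * ln (al / be) + be - al <= mutual_info P X Y.
Proof.
move=> P0 tot eal ebe alp bep; rewrite eal in alp; rewrite ebe in bep.
rewrite MI_pairs (bigID S) /=.
set a := fun ab : T1 * T2 => probE P (fun w => (X w == ab.1) && (Y w == ab.2)).
set b := fun ab : T1 * T2 => probE P (fun w => X w == ab.1) * probE P (fun w => Y w == ab.2).
have a0 : forall ab, 0 <= a ab by move=> ab; apply: sumr_ge0.
have b0 : forall ab, 0 <= b ab by move=> ab; apply: mulr_ge0; apply: sumr_ge0.
have ab0 : forall ab, a ab != 0 -> 0 < b ab.
  move=> ab an0; have ap : 0 < a ab by rewrite lt_def an0 a0.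
  apply: mulr_gt0; apply: (lt_le_trans ap); apply: probE_mono => // w /andP[] //.
have L1 := @logsum _ rP S a b a0 b0 ab0.
rewrite /a /b marg1 marg2 in L1.
have {L1}L1 := L1 alp bep.
have L2 : \sum_(ab <- rP | ~~ S ab) (a ab - b ab) <= \sum_(ab <- rP | ~~ S ab) KLt (a ab) (b ab).
  by apply: ler_sum => ab _; exact: (@KLt_ge0 (a ab) (b ab) (a0 ab) (b0 ab) (@ab0 ab)).
rewrite sumrB /a /b (marg1 (predC S)) (marg2 (predC S)) /= in L2.
have e1 : \sum_(w | ~~ S (X w, Y w)) P w = 1 - al.
  by rewrite eal -tot [Z in _ = Z - _](bigID (fun w => S (X w, Y w))) /= addrAC subrr add0r.
have e2 : \sum_w \sum_w' (if ~~ S (X w, Y w') then P w * P w' else 0) = 1 - be.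
    
    have tt : \sum_w \sum_(w0 : Om) P w * P w0 = 1 by rewrite -big_distrlr /= tot mulr1.
    have pw : forall (x : R) (bb : bool), (if ~~ bb then x else 0) = x - (if bb then x else 0).
      by move=> x []; rewrite ?subrr ?subr0.
    under eq_bigr => w _ do under eq_bigr => w0 _ do rewrite pw.
    rewrite ebe -tt -sumrB; apply: eq_bigr => w _; by rewrite sumrB.
rewrite e1 e2 in L2.
rewrite eal ebe; lra.
Qed.

End MI.

Section P.
Variables (c s : R).
Let law := coord_law c s.
Definition xr (t : 'I_3) : R := (sgn3 t)%:~R.

Lemma sum_law (F : 'I_3 -> R) : \sum_t law t * F t =
  c / s * F ord0 + (1 - 2 * c / s) * F (inord 1) + c / s * F (inord 2).
Proof.
rewrite !big_ord_recr big_ord0 /= add0r /law /coord_law /=.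
congr (_ * F _ + _ * F _ + _ * F _); apply: val_inj => //=; by rewrite inordK.
Qed.

Lemma xr0 : xr ord0 = -1. Proof. by rewrite /xr /sgn3 /=. Qed.
Lemma xr1 : xr (inord 1) = 0. Proof. by rewrite /xr /sgn3 /= inordK. Qed.
Lemma xr2 : xr (inord 2) = 1. Proof. by rewrite /xr /sgn3 /= inordK. Qed.


Lemma law_sum1 : \sum_t law t = 1.
Proof.
rewrite (eq_bigr (fun t => law t * 1)) => [|t _]; last by rewrite mulr1.
rewrite sum_law !mulr1; ring.
Qed.

Variable n : nat.
Let P := @xlaw R n c s.

Lemma Eprod (g : 'I_n -> 'I_3 -> R) :
  \sum_w P w * \prod_i g i (w i) = \prod_i \sum_t law t * g i t.
Proof.
rewrite bigA_distr_bigA; apply: eq_bigr => w _.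
by rewrite /P /xlaw -big_split.
Qed.

Lemma prod_pick (k : 'I_n) (F : 'I_3 -> R) (w : {ffun 'I_n -> 'I_3}) :
  \prod_i (if i == k then F (w i) else 1) = F (w k).
Proof. by rewrite -big_mkcond big_pred1_eq. Qed.


Lemma law_x : \sum_t law t * xr t = 0.
Proof. by rewrite sum_law xr0 xr1 xr2; ring. Qed.

Lemma law_x2 : \sum_t law t * (xr t * xr t) = 2 * c / s.
Proof. by rewrite sum_law xr0 xr1 xr2; ring. Qed.

Variables (j : 'I_n) (th : 'I_n -> R).
Definition Wf (w : {ffun 'I_n -> 'I_3}) := \sum_(k | k != j) th k * xr (w k).

Lemma Epair (phi : 'I_3 -> R) k l : k != j -> l != j ->
  \sum_w P w * (phi (w j) * (xr (w k) * xr (w l))) =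
  if k == l then (\sum_t law t * phi t) * (2 * c / s) else 0.
Proof.
move=> kj lj.
rewrite (eq_bigr (fun w => P w * \prod_i ((if i == j then phi (w i) else 1) *
   (if i == k then xr (w i) else 1) * (if i == l then xr (w i) else 1)))); last first.
  by move=> w _; rewrite !big_split /= !prod_pick !mulrA.
rewrite (Eprod (fun i t => (if i == j then phi t else 1) * (if i == k then xr t else 1) * (if i == l then xr t else 1))); case: eqP => [<-|/eqP kl].
  rewrite (bigD1 j) //= (bigD1 k) //= [\prod_(i | _ && _) _]big1 ?mulr1; last first.
    move=> i /andP[ij ik]; rewrite (negbTE ij) (negbTE ik).
    by rewrite (eq_bigr (fun t => law t)) ?law_sum1 // => t _; rewrite !mulr1.
  rewrite !eqxx (negbTE kj) eq_sym (negbTE kj).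
  have -> : \sum_t law t * (phi t * 1 * 1) = \sum_t law t * phi t.
    by apply: eq_bigr => t _; rewrite !mulr1.
  have -> : \sum_t law t * (1 * xr t * xr t) = 2 * c / s.
    by rewrite -law_x2; apply: eq_bigr => t _; rewrite mul1r.
  by [].
rewrite (bigD1 k) //= eqxx (negbTE kj) (negbTE kl).
rewrite (eq_bigr (fun t => law t * xr t)) ?law_x ?mul0r // => t _.
by rewrite mul1r mulr1.
Qed.

Lemma EW2 (phi : 'I_3 -> R) :
  \sum_w P w * (phi (w j) * Wf w ^+ 2) =
  (\sum_t law t * phi t) * (2 * c / s) * \sum_(k | k != j) th k ^+ 2.
Proof.
set C := (\sum_t law t * phi t) * (2 * c / s).
transitivity (\sum_(k | k != j) \sum_(l | l != j) th k * th l *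
   \sum_w P w * (phi (w j) * (xr (w k) * xr (w l)))).
  symmetry.
  under eq_bigr => k _ do (under eq_bigr => l _ do rewrite mulr_sumr; rewrite exchange_big /=).
  rewrite exchange_big /=; apply: eq_bigr => w _.
  rewrite [X in phi _ * X]expr2 /Wf big_distrlr /= !mulr_sumr; apply: eq_bigr => k _.
  rewrite !mulr_sumr; apply: eq_bigr => l _; ring.
rewrite mulr_sumr; apply: eq_bigr => k kj.
under eq_bigr => l lj do rewrite Epair //.
rewrite (bigD1 k) //= eqxx [\sum_(i | _ && _) _]big1 ?addr0; first by rewrite expr2 mulrC.
by move=> l /andP[_ lk]; rewrite eq_sym (negbTE lk) mulr0.
Qed.


Lemma Ephi (phi : 'I_3 -> R) : \sum_w P w * phi (w j) = \sum_t law t * phi t.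
Proof.
rewrite (eq_bigr (fun w => P w * \prod_i (if i == j then phi (w i) else 1))); last first.
  by move=> w _; rewrite prod_pick.
rewrite (Eprod (fun i t => if i == j then phi t else 1)) (bigD1 j) //= eqxx.
rewrite [\prod_(i | _) _]big1 ?mulr1 // => i ij; rewrite (negbTE ij).
by rewrite -[RHS]law_sum1; apply: eq_bigr => t _; rewrite mulr1.
Qed.

End P.

Lemma dist_int (u f : R) (m : int) (h : R) : f = u - m%:~R -> `|u| < 1 - h -> `|f| < h -> h <= 1 / 2 ->
  m = 0.
Proof.
move=> -> hu hf h2; apply/eqP; apply: contraLR isT => mn0; apply/negP.
have := @norm_intr_ge1 _ (m%:~R : R) (intr_int _ _); rewrite intr_eq0 => /(_ mn0) m1.
have : `|m%:~R : R| <= `|u| + `|u - m%:~R|.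
  have e : (m%:~R : R) = u - (u - m%:~R) by rewrite opprB addrC subrK.
  by rewrite [X in `|X| <= _]e ler_normB.
lra.
Qed.


Lemma tri (a b : R) : `|a| <= `|b| + `|b - a|.
Proof.
have e : a = b - (b - a) by rewrite opprB addrC subrK.
by rewrite [X in `|X| <= _]e ler_normB.
Qed.

Lemma keyB1 (tj Wv : R) (M : int) : `|tj| <= 1/2 -> `|Wv| < `|tj| / 2 ->
  `|Frac (tj * 1 + Wv + M%:~R - tj)| < `|tj| / 2.
Proof.
move=> h1 h2; have -> : tj * 1 + Wv + M%:~R - tj = Wv + M%:~R by ring.
rewrite FracDz Frac_id //.
by move: h2; rewrite ltr_norml => /andP[a b]; apply/andP; split; lra.
Qed.

Definition yz {r} (y : 'rV[R]_r) (z : 'cV[int]_r) : R := \sum_i y 0 i * (z i 0)%:~R.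

Lemma yz_decomp r n (y : 'rV[R]_r) (A : 'M[int]_(r,n)) (w : {ffun 'I_n -> 'I_3}) :
  exists M : int, yz y (A *m xvec w) = \sum_k Frac (yA y A 0 k) * xr (w k) + M%:~R.
Proof.
exists (\sum_k Num.ceil (yA y A 0 k - 2^-1) * sgn3 (w k)).
rewrite rmorph_sum /=.
transitivity (\sum_k yA y A 0 k * xr (w k)).
  rewrite /yA /yz; under [RHS]eq_bigr => k _ do rewrite !mxE mulr_suml.
  rewrite [RHS]exchange_big /=; apply: eq_bigr => i _.
  rewrite !mxE rmorph_sum mulr_sumr; apply: eq_bigr => k _.
  by rewrite !mxE /xr rmorphM /= mulrA.
rewrite -big_split /=; apply: eq_bigr => k _.
rewrite /Frac rmorphM /= /xr; ring.
Qed.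

Lemma keyB0 (tj Wv : R) (M : int) : `|tj| <= 1/2 ->
  `|Frac (tj * 0 + Wv + M%:~R - tj)| < `|tj| / 2 -> `|tj| / 2 <= `|Wv|.
Proof.
move=> h1 hf; rewrite leNgt; apply/negP => hW.
have e : tj * 0 + Wv + M%:~R - tj = (Wv - tj) + M%:~R by ring.
move: hf; rewrite e FracDz; have [m hm] := FracE (Wv - tj) => hf.
have t1 := tri tj Wv.
have t2 : `|Wv - tj| <= `|Wv| + `|tj| by rewrite ler_normB.
have m0 : m = 0.
  apply: (@dist_int (Wv - tj) _ m (`|tj| / 2) hm _ hf); lra.
move: hf; rewrite hm m0 subr0; lra.
Qed.

Lemma sg0 : sgn3 ord0 = -1. Proof. by []. Qed.
Lemma sg1 : sgn3 (inord 1 : 'I_3) = 0. Proof. by rewrite /sgn3 /= inordK. Qed.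
Lemma sg2 : sgn3 (inord 2 : 'I_3) = 1. Proof. by rewrite /sgn3 /= inordK. Qed.

Lemma coord_law_ge0 (c s : R) t : 0 < c -> c <= 1/200 -> 1 <= s -> 0 <= coord_law c s t.
Proof.
move=> c0 cle s1; have sp : 0 < s by lra.
have pc : c / s <= c by rewrite ler_pdivrMr // ler_peMr // ltW.
have pp : 0 < c / s by rewrite divr_gt0.
rewrite /coord_law; case: ifP => _; last exact: ltW.
have -> : 2 * c / s = 2 * (c / s) by rewrite mulrA.
lra.
Qed.

End S.

Theorem mainTheorem4 (R : realType) :
  exists c0 : R, 0 < c0 /\
  forall c : R, 0 < c -> c <= c0 ->
  exists K : R, 0 < K /\
  forall (r n : nat) (A : 'M[int]_(r, n)) (s : R) (y : 'rV[R]_r) (j : 'I_n),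
    1 <= s ->
    Frac (yA y A 0 j) != 0 ->
    s^-1 * (\sum_(k < n) (Frac (yA y A 0 k)) ^+ 2) <= (Frac (yA y A 0 j)) ^+ 2 ->
    K / s <= mutual_info (@xlaw R n c s)
                         (fun w => A *m xvec w) (fun w => sgn3 (w j)).
Proof.
exists (1/200); split; first lra.
move=> c c0 cle; exists (c/4); split; first lra.
move=> r n A s y j hs hnz hcond.
have sp : 0 < s by lra.
pose p := c / s.
have pp : 0 < p by rewrite divr_gt0.
have pc : p <= c by rewrite /p ler_pdivrMr // ler_peMr // ltW.
pose th := fun k => Frac (yA y A 0 k).
pose tj := th j.
have tjn : 0 < `|tj| by rewrite normr_gt0.
have tj2 : `|tj| <= 1/2.
  by have := @Frac_itv R (yA y A 0 j); rewrite /tj /th ler_norml => /andP[a b]; apply/andP; split; lra.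
pose h := `|tj| / 2.
have hp : 0 < h by rewrite /h; lra.
pose P := @xlaw R n c s.
have P0 : forall w, 0 <= P w.
  by move=> w; apply: prodr_ge0 => i _; exact: coord_law_ge0.
have tot : \sum_w P w = 1.
  have e := @Ephi R c s n j (fun _ => 1).
  rewrite (eq_bigr (fun w => P w * 1)) ?e; last by move=> *; rewrite mulr1.
  by rewrite -[RHS](@law_sum1 R c s); apply: eq_bigr => t _; rewrite mulr1.
pose W := @Wf R n j th.
pose St := \sum_(k | k != j) th k ^+ 2.
have St0 : 0 <= St by apply: sumr_ge0 => k _; apply: sqr_ge0.
have hc2 : s^-1 * (tj ^+ 2 + St) <= tj ^+ 2.
  have e : \sum_(k < n) Frac (yA y A 0 k) ^+ 2 = tj ^+ 2 + St by rewrite (bigD1 j).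
  by rewrite -e.
pose D := (h ^+ 2)^-1 * (2 * c / s * St).
have h2e : h ^+ 2 = tj ^+ 2 / 4.
  by rewrite /h exprMn real_normK ?num_real //; field.
have hD : D <= 8 * c.
  have sv : 0 < s^-1 by rewrite invr_gt0.
  have q1 : s^-1 * St <= tj ^+ 2.
    have : 0 <= s^-1 * tj ^+ 2 by apply: mulr_ge0; [exact: ltW | exact: sqr_ge0].
    move: hc2; rewrite mulrDr; lra.
  have e : 2 * c / s * St = 2 * c * (s^-1 * St) by rewrite -!mulrA.
  have h2p : 0 < h ^+ 2 by rewrite exprn_gt0.
  rewrite /D e mulrC ler_pdivrMr // h2e.
  have := ler_wpM2l (ltW c0) q1; lra.
pose X := fun w : {ffun 'I_n -> 'I_3} => A *m xvec w.
pose Bp := fun z : 'cV[int]_r => `|Frac (@yz R r y z - tj)| < h.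
have decomp : forall w, exists M : int, @yz R r y (X w) = tj * @xr R (w j) + W w + M%:~R.
  move=> w; have [M eM] := @yz_decomp R r n y A w.
  by exists M; rewrite eM (bigD1 j) //= addrA.
have key1 : forall w : {ffun 'I_n -> 'I_3}, sgn3 (w j) == 1 -> `|W w| < h -> Bp (X w).
  move=> w /eqP e hw; have [M eM] := decomp w; rewrite /Bp eM /xr e.
  exact: keyB1.
have key0 : forall w : {ffun 'I_n -> 'I_3}, sgn3 (w j) == 0 -> Bp (X w) -> h <= `|W w|.
  move=> w /eqP e; have [M eM] := decomp w; rewrite /Bp eM /xr e.
  exact: keyB0.
pose f1 := fun t : 'I_3 => ((sgn3 t == 1)%:R : R).
pose f2 := fun t : 'I_3 => ((sgn3 t != 0)%:R : R).
have l1 : \sum_t coord_law c s t * f1 t = p.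
  by rewrite (@sum_law R c s f1) /f1 sg0 sg1 sg2 /= /p; ring.
have l2 : \sum_t coord_law c s t * f2 t = 2 * p.
  by rewrite (@sum_law R c s f2) /f2 sg0 sg1 sg2 /= /p; ring.
have l0 : \sum_t coord_law c s t * 1 = 1.
  by rewrite -[RHS](@law_sum1 R c s); apply: eq_bigr => t _; rewrite mulr1.
have h2p : 0 < h ^+ 2 by rewrite exprn_gt0.
have Wnn : forall w, 0 <= W w ^+ 2 / h ^+ 2.
  by move=> w; apply: mulr_ge0; [exact: sqr_ge0 | rewrite invr_ge0 ltW].
have Wbig : forall w, h <= `|W w| -> 1 <= W w ^+ 2 / h ^+ 2.
  move=> w hw; rewrite ler_pdivlMr // mul1r -(real_normK (num_real (W w))).
  by have := ler_pM (ltW hp) (ltW hp) hw hw; rewrite -!expr2.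
pose S := fun ab : 'cV[int]_r * int => Bp ab.1 && (ab.2 == 1).
pose al := \sum_(w | S (X w, sgn3 (w j))) P w.
have hal : p - p * D <= al.
  have e : \sum_w P w * (f1 (w j) * (1 - W w ^+ 2 / h ^+ 2)) = p - p * D.
    rewrite (eq_bigr (fun w => P w * f1 (w j) - (h ^+ 2)^-1 * (P w * (f1 (w j) * W w ^+ 2)))); last first.
      by move=> w _; ring.
    rewrite sumrB -mulr_sumr (@Ephi R c s n j f1) l1 (@EW2 R c s n j th f1) l1 /D -/St; ring.
  rewrite -e /al [Z in _ <= Z]big_mkcond /=; apply: ler_sum => w _.
  have Rge : 0 <= (if S (X w, sgn3 (w j)) then P w else 0) by case: ifP.
  rewrite /f1; case: eqP => e1 /=; last by rewrite mul0r mulr0.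
  rewrite mul1r; case: (ltP (`|W w|) h) => hw.
    rewrite /S /= (key1 w (introT eqP e1) hw) e1 eqxx.
    rewrite -[X in _ <= X]mulr1; apply: ler_wpM2l => //; have := Wnn w; lra.
  apply: le_trans Rge; apply: mulr_ge0_le0 => //; have := Wbig w hw; lra.
pose PB := \sum_(w | Bp (X w)) P w.
have hPB : PB <= 2 * p + D.
  have e : \sum_w P w * (f2 (w j) + W w ^+ 2 / h ^+ 2) = 2 * p + D.
    rewrite (eq_bigr (fun w => P w * f2 (w j) + (h ^+ 2)^-1 * (P w * ((fun _ => 1) (w j) * W w ^+ 2)))); last first.
      by move=> w _ /=; ring.
    rewrite big_split /= -mulr_sumr (@Ephi R c s n j f2) l2 (@EW2 R c s n j th (fun _ => 1)) l0 /D -/St; ring.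
  rewrite -e /PB big_mkcond /=; apply: ler_sum => w _.
  have f2n : 0 <= f2 (w j) by rewrite /f2; case: (_ != _).
  have Rge : 0 <= P w * (f2 (w j) + W w ^+ 2 / h ^+ 2).
    by apply: mulr_ge0 => //; apply: addr_ge0 => //.
  case: ifP => hB //.
  rewrite /f2; case: eqP => e0 /=.
    have := Wbig w (key0 w (introT eqP e0) hB) => hw.
    by rewrite add0r -[X in X <= _]mulr1; apply: ler_wpM2l.
  by rewrite -[X in X <= _]mulr1; apply: ler_wpM2l => //; have := Wnn w; lra.
have alPB : al <= PB.
  rewrite /al /PB big_mkcond [Z in _ <= Z]big_mkcond /=; apply: ler_sum => w _.
  rewrite /S /=; case: (Bp _) => //=; by case: ifP.
have alp : al <= p.
  rewrite -l1 -(@Ephi R c s n j f1) /al big_mkcond /=; apply: ler_sum => w _.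
  rewrite /S /f1 /=; case: (Bp _); case: (_ == 1) => /=; by rewrite ?mulr1 ?mulr0.
pose be := PB * p.
have hbe : be = \sum_w \sum_(w' : {ffun 'I_n -> 'I_3}) (if S (X w, sgn3 (w' j)) then P w * P w' else 0).
  rewrite /be -l1 -(@Ephi R c s n j f1) /PB big_mkcond /= big_distrlr /=.
  apply: eq_bigr => w _; apply: eq_bigr => w' _.
  rewrite /S /f1 /=; case: (Bp _); case: (_ == 1) => /=; by rewrite ?mulr1 ?mulr0 ?mul0r.
have pD := ler_wpM2l (ltW pp) hD.
have cp := ler_wpM2r (ltW pp) cle.
have pc2 := ler_wpM2r (ltW pp) pc.
have alpos : 0 < al by lra.
have PBpos : 0 < PB by lra.
have bepos : 0 < be by rewrite /be mulr_gt0.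
have L := @MI_lb R _ _ _ P X (fun w => sgn3 (w j)) S al be P0 tot erefl hbe alpos bepos.
have b1 : be <= (2 * p + D) * p by rewrite /be; apply: ler_wpM2r => //; exact: ltW.
have b1' : (2 * p + D) * p <= (2 * p + 8 * c) * p by apply: ler_wpM2r; [exact: ltW | lra].
have rat : 16 <= al / be.
  rewrite ler_pdivlMr //.
  have e : (2 * p + 8 * c) * p = 2 * (p * p) + 8 * (c * p) by ring.
  lra.
have ln2 : 1 / 2 <= ln (2 : R).
  have := @ln_ge R 2 (ltr0Sn _ 1); lra.
have ln16 : 2 <= ln (16 : R).
  have -> : (16 : R) = 2 ^+ 4 by ring.
  rewrite lnXn //; lra.
have lnr : ln (16 : R) <= ln (al / be) by rewrite ler_ln ?posrE ?divr_gt0.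
have m2 : al * 2 <= al * ln (al / be) by apply: ler_wpM2l; [exact: ltW | lra].
have -> : c / 4 / s = p / 4 by rewrite /p mulrAC.
apply: le_trans L; lra.
Qed.
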